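(* Suppose that $R$ has both $\mathbf{x}$-vertices and $\mathbf{y}$-vertices. If $(x^1,y^1)$ is a $\mathbf{y}$-vertex of $R$, then there exists an $\mathbf{x}$-vertex $(x',y')$ of $R$ such that \[ d_R((x^1,y^1),(x',y'))\le d(\bar A)+d(Q_B)+1. \]
   Context: Let $A\in\mathbb{R}^{m_1\times n_1}$, nonzero $a\in\mathbb{R}^{1\times n_1}$, nonzero $b\in\mathbb{R}^{1\times n_2}$, $B\in\mathbb{R}^{m_2\times n_2}$, $c_A\in\mathbb{R}^{m_1}$, $c_B\in\mathbb{R}^{m_2}$, $c_a,c_b\in\mathbb{R}$, and $R=\{(x,y)\in\mathbb{R}^{n_1}\times\mathbb{R}^{n_2}: Ax=c_A,\ ax+by=c_a+c_b,\ By=c_B,\ x,y\ge 0\}$. Assume $R$ is simple (nondegenerate). Let $P_A=\{x: Ax=c_A, x\ge 0\}$, $Q_B=\{y: By=c_B, y\ge 0\}$ and $\bar A=\begin{bmatrix}A\\ a\end{bmatrix}$. A vertex $(x,y)$ of $R$ is an $\mathbf{x}$-vertex if $x$ is a vertex of $P_A$, and a $\mathbf{y}$-vertex if $y$ is a vertex of $Q_B$. $d_R(v,w)$ is the minimum number of edges of an edge walk in $R$ from $v$ to $w$. For a polyhedron $P$, $d(P)$ is its combinatorial diameter, and for a matrix $M\in\mathbb{R}^{m\times n}$, $d(M):=\max\{d(\{z: Mz=r, z\ge 0\}): r\in\mathbb{R}^m\}$. *)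

(* Defs.v *)
From HB Require Import structures.
From mathcomp Require Import all_boot all_order all_algebra.
From mathcomp Require Import reals.
Set Implicit Arguments. Unset Strict Implicit. Unset Printing Implicit Defensive.
Import Order.TTheory GRing.Theory Num.Theory.
Local Open Scope ring_scope.

Section Poly.
Variable R : realType.

Definition dotp n (c : 'rV[R]_n) (z : 'cV[R]_n) : R := \sum_(i < n) c 0 i * z i 0.

Definition std_poly m n (M : 'M[R]_(m, n)) (r : 'cV[R]_m) : 'cV[R]_n -> Prop :=
  fun z => M *m z = r /\ forall i, 0 <= z i 0.

Definition is_vertex n (P : 'cV[R]_n -> Prop) (z : 'cV[R]_n) : Prop :=
  P z /\ exists (c : 'rV[R]_n) (delta : R),
    (forall y, P y -> dotp c y <= delta) /\
    (forall y, P y -> (dotp c y = delta <-> y = z)).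

Definition adjacent n (P : 'cV[R]_n -> Prop) (v w : 'cV[R]_n) : Prop :=
  is_vertex P v /\ is_vertex P w /\ v <> w /\
  exists (c : 'rV[R]_n) (delta : R),
    (forall y, P y -> dotp c y <= delta) /\
    (forall y, P y -> (dotp c y = delta <->
        exists t : R, 0 <= t <= 1 /\ y = t *: v + (1 - t) *: w)).

Fixpoint walk_le n (P : 'cV[R]_n -> Prop) (k : nat) (v w : 'cV[R]_n) : Prop :=
  match k with
  | O => v = w
  | k'.+1 => v = w \/ exists u, adjacent P v u /\ walk_le P k' u w
  end.

Definition diam_le n (P : 'cV[R]_n -> Prop) (k : nat) : Prop :=
  forall v w, is_vertex P v -> is_vertex P w -> walk_le P k v w.

(* d(M) <= k : every polyhedron {z : M z = r, z >= 0} has diameter at most k *)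
Definition mx_diam_le m n (M : 'M[R]_(m, n)) (k : nat) : Prop :=
  forall r : 'cV[R]_m, diam_le (std_poly M r) k.

Definition std_nondegenerate m n (M : 'M[R]_(m, n)) (r : 'cV[R]_m) : Prop :=
  forall z, is_vertex (std_poly M r) z -> #|[set i : 'I_n | z i 0 != 0]| = \rank M.

(* the constraint matrix / right-hand side of R, variables z = (x ; y) *)
Definition Rmat m1 n1 m2 n2 (A : 'M[R]_(m1, n1)) (a : 'rV[R]_n1)
  (b : 'rV[R]_n2) (B : 'M[R]_(m2, n2)) : 'M[R]_(m1 + (1 + m2), n1 + n2) :=
  col_mx (row_mx A 0) (col_mx (row_mx a b) (row_mx 0 B)).

Definition Rrhs m1 m2 (cA : 'cV[R]_m1) (ca cb : R) (cB : 'cV[R]_m2)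
  : 'cV[R]_(m1 + (1 + m2)) :=
  col_mx cA (col_mx (const_mx (ca + cb)) cB).

End Poly.

(* Main.v *)
Require Import Defs.
From HB Require Import structures.
From mathcomp Require Import all_boot all_order all_algebra.
From mathcomp Require Import reals boolp.
From mathcomp.algebra_tactics Require Import ring lra.
From Stdlib Require Import Classical.
Set Implicit Arguments. Unset Strict Implicit. Unset Printing Implicit Defensive.
Import Order.TTheory GRing.Theory Num.Theory.
Local Open Scope ring_scope.

Section Basics.
Variable R : realType.

Lemma dotpE n (c : 'rV[R]_n) z : dotp c z = (c *m z) 0 0.
Proof. by rewrite /dotp mxE. Qed.

Lemma dotpD n (c : 'rV[R]_n) x y : dotp c (x + y) = dotp c x + dotp c y.
Proof. by rewrite !dotpE mulmxDr mxE. Qed.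

Lemma dotpZ n (c : 'rV[R]_n) t x : dotp c (t *: x) = t * dotp c x.
Proof. by rewrite !dotpE -scalemxAr mxE. Qed.

Lemma dotpN n (c : 'rV[R]_n) x : dotp c (- x) = - dotp c x.
Proof. by rewrite !dotpE mulmxN mxE. Qed.

Lemma dotpB n (c : 'rV[R]_n) x y : dotp c (x - y) = dotp c x - dotp c y.
Proof. by rewrite dotpD dotpN. Qed.

Lemma dotpZl n (c : 'rV[R]_n) t x : dotp (t *: c) x = t * dotp c x.
Proof. by rewrite !dotpE -scalemxAl mxE. Qed.

Lemma dotp0 n (c : 'rV[R]_n) : dotp c 0 = 0.
Proof. by rewrite dotpE mulmx0 mxE. Qed.

Lemma argmin_seq (T : eqType) (s : seq T) (F : T -> R) :
  s != [::] -> exists2 j, j \in s & forall i, i \in s -> F j <= F i.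
Proof.
elim: s => // x s IH _.
case: (eqVneq s [::]) => [->|ns].
  by exists x; rewrite ?inE // => i; rewrite inE => /eqP ->.
have [j js Hj] := IH ns.
case: (leP (F x) (F j)) => h.
  exists x; first by rewrite inE eqxx.
  move=> i; rewrite inE => /orP [/eqP ->//|/Hj]; exact: le_trans.
exists j; first by rewrite inE js orbT.
move=> i; rewrite inE => /orP [/eqP ->|/Hj //]; exact: ltW.
Qed.

Lemma ray_exitP n (P : pred 'I_n) (z d : 'I_n -> R) :
  (forall j, P j -> 0 <= z j) -> (exists j, P j /\ d j < 0) ->
  exists t, 0 <= t /\ (forall j, P j -> 0 <= z j + t * d j) /\
    exists j, [/\ P j, d j < 0 & z j + t * d j = 0].
Proof.
move=> z0 [j1 [Pj1 dj1]].
set s := [seq j <- enum 'I_n | P j && (d j < 0)].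
have ns : s != [::].
  apply/eqP => es; have : j1 \in s by rewrite mem_filter Pj1 dj1 mem_enum.
  by rewrite es.
have [j0 j0s Hj0] := argmin_seq (fun j => z j / - d j) ns.
move: j0s; rewrite mem_filter mem_enum andbT => /andP [Pj0 dj0].
have ndj0 : 0 < - d j0 by rewrite oppr_gt0.
exists (z j0 / - d j0); split; first by rewrite divr_ge0 // ?z0 // ltW.
split; last first.
  exists j0; split=> //; rewrite -[d j0]opprK mulrN opprK divfK ?subrr //.
  by rewrite lt0r_neq0.
move=> j Pj; case: (leP 0 (d j)) => dj.
  by rewrite addr_ge0 ?z0 // mulr_ge0 // divr_ge0 ?z0 // ltW.
have : j \in s by rewrite mem_filter Pj dj mem_enum.
move/Hj0 => h.
have ndj : 0 < - d j by rewrite oppr_gt0.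
by rewrite -[d j]opprK mulrN subr_ge0 -ler_pdivlMr.
Qed.

Definition sub2 n (g v w : 'cV[R]_n) := forall j, v j 0 = 0 -> w j 0 = 0 -> g j 0 = 0.
Definition indep m n (M : 'M[R]_(m, n)) (z : 'cV[R]_n) :=
  forall g, M *m g = 0 -> sub2 g z z -> g = 0.
Definition edgeDir m n (M : 'M[R]_(m, n)) (z e : 'cV[R]_n) :=
  forall g, M *m g = 0 -> sub2 g z e -> exists mu, g = mu *: e.

Lemma perturb n (z d : 'cV[R]_n) : (forall j, 0 <= z j 0) -> sub2 d z z ->
  exists2 eps, 0 < eps &
    forall j, 0 <= z j 0 + eps * d j 0 /\ 0 <= z j 0 - eps * d j 0.
Proof.
move=> z0 sd.
case: (boolP [exists j, d j 0 != 0]) => [/existsP [j1 dj1]|].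
  have ex1 : exists j, d j 0 != 0 /\ - `|d j 0| < 0.
    by exists j1; rewrite oppr_lt0 normr_gt0.
  have [t [t0 [feas [j [Pj hj hz]]]]] := @ray_exitP n (fun j => d j 0 != 0)
     (fun j => z j 0) (fun j => - `|d j 0|) (fun j _ => z0 j) ex1.
  have zj : z j 0 != 0 by apply/eqP => zj; move/eqP: Pj; apply; apply: sd.
  have tp : 0 < t.
    rewrite lt_neqAle t0 andbT; apply/eqP => t0'.
    by move: hz; rewrite -t0' mul0r addr0; apply/eqP.
  exists t => // i.
  case: (eqVneq (d i 0) 0) => [->|di]; first by rewrite mulr0 addr0 subr0.
  have := feas i di; rewrite mulrN => h.
  split; apply: (le_trans h); rewrite lerD2l.
    by rewrite -mulrN ler_pM2l // lerNl -normrN ler_norm.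
  by rewrite lerN2 ler_pM2l // ler_norm.
rewrite negb_exists => /forallP dz.
exists 1 => // i; move: (dz i); rewrite negbK => /eqP ->.
by rewrite mulr0 addr0 subr0.
Qed.

Definition zrow n (Z : pred 'I_n) : 'rV[R]_n := \row_j (if Z j then -1 else 0).

Lemma zrowE n (Z : pred 'I_n) (y : 'cV[R]_n) : dotp (zrow Z) y = - \sum_(j | Z j) y j 0.
Proof.
rewrite /dotp [in RHS]big_mkcond /= -sumrN; apply: eq_bigr => i _.
by rewrite mxE; case: (Z i); rewrite ?mul0r ?oppr0 // mulN1r.
Qed.

Lemma zrow_le n (Z : pred 'I_n) (y : 'cV[R]_n) : (forall j, 0 <= y j 0) -> dotp (zrow Z) y <= 0.
Proof. by move=> y0; rewrite zrowE oppr_le0 sumr_ge0. Qed.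

Lemma zrow_eq0 n (Z : pred 'I_n) (y : 'cV[R]_n) : (forall j, 0 <= y j 0) ->
  (dotp (zrow Z) y = 0 <-> forall j, Z j -> y j 0 = 0).
Proof.
move=> y0; rewrite zrowE; split.
  by move/eqP; rewrite oppr_eq0 => /eqP; apply: psumr_eq0P.
by move=> h; rewrite big1 ?oppr0.
Qed.

Lemma std_polyP m n (M : 'M[R]_(m, n)) r z :
  std_poly M r z <-> M *m z = r /\ forall i, 0 <= z i 0.
Proof. by []. Qed.

Lemma indep_vertex m n (M : 'M[R]_(m, n)) r z :
  std_poly M r z -> indep M z -> is_vertex (std_poly M r) z.
Proof.
move=> Pz hi; split=> //.
exists (zrow (fun j => z j 0 == 0)), 0; split.
  by move=> y [_ y0]; apply: zrow_le.
move=> y [My y0]; rewrite zrow_eq0 //; split.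
  move=> h; apply/eqP; rewrite -subr_eq0; apply/eqP; apply: hi.
    by rewrite mulmxBr My Pz.1 subrr.
  by move=> j zj _; rewrite !mxE (h j) ?zj ?subrr //; apply/eqP.
by move=> -> j /eqP.
Qed.

Lemma vertex_indep m n (M : 'M[R]_(m, n)) r z :
  is_vertex (std_poly M r) z -> indep M z.
Proof.
move=> [[Mz z0] [c [del [hle heq]]]] g Mg sg.
have [eps eps0 he] := perturb z0 sg.
have Pp : std_poly M r (z + eps *: g).
  split; first by rewrite mulmxDr -scalemxAr Mg scaler0 addr0.
  by move=> i; rewrite !mxE; case: (he i).
have Pm : std_poly M r (z - eps *: g).
  split; first by rewrite mulmxBr -scalemxAr Mg scaler0 subr0.
  by move=> i; rewrite !mxE; case: (he i).
have cz : dotp c z = del by apply/(heq z).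
have h1 := hle _ Pp; have h2 := hle _ Pm.
rewrite dotpD dotpZ cz in h1; rewrite dotpB dotpZ cz in h2.
have cg : dotp c g = 0.
  apply/eqP; rewrite eq_le; apply/andP; split.
    by rewrite -(pmulr_rle0 _ eps0) -(lerD2l del) addr0.
  rewrite -(pmulr_rge0 _ eps0); move: h2; rewrite -lerBrDl subrr.
  by rewrite oppr_le0.
have : z + eps *: g = z by apply/(heq _ Pp); rewrite dotpD dotpZ cz cg mulr0 addr0.
move/eqP; rewrite -subr_eq0 addrAC subrr add0r scaler_eq0 => /orP [|/eqP //].
by rewrite gt_eqF.
Qed.

Lemma vertexP m n (M : 'M[R]_(m, n)) r z :
  is_vertex (std_poly M r) z <-> std_poly M r z /\ indep M z.
Proof.
split; first by move=> h; split; [case: h | exact: vertex_indep h].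
by case; apply: indep_vertex.
Qed.


Lemma std_conv m n (M : 'M[R]_(m, n)) r p q t :
  std_poly M r p -> std_poly M r q -> 0 <= t <= 1 ->
  std_poly M r (t *: p + (1 - t) *: q).
Proof.
move=> [Mp p0] [Mq q0] /andP [t0 t1]; split.
  by rewrite mulmxDr -!scalemxAr Mp Mq -scalerDl subrKC scale1r.
move=> i; rewrite !mxE addr_ge0 // mulr_ge0 // ?subr_ge0 //.
Qed.

Lemma extreme n (P : 'cV[R]_n -> Prop) z p q t :
  is_vertex P z -> P p -> P q -> 0 < t -> t < 1 ->
  z = t *: p + (1 - t) *: q -> q = z.
Proof.
move=> [Pz [c [del [hle heq]]]] Pp Pq t0 t1 ez.
apply/(heq _ Pq).
have cz : dotp c z = del by apply/(heq _ Pz).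
have := hle _ Pp; have := hle _ Pq.
move: cz; rewrite ez dotpD !dotpZ => cz h1 h2.
move: cz h1 h2; move: (dotp c p) (dotp c q) => cp cq cz h1 h2.
have e : (1 - t) * (del - cq) = - (t * (del - cp)) by rewrite -cz; ring.
have : (1 - t) * (del - cq) <= 0.
  by rewrite e oppr_le0 mulr_ge0 // ?subr_ge0 // ltW.
rewrite pmulr_rle0 ?subr_gt0 // subr_le0 => h3.
by apply/eqP; rewrite eq_le h1 h3.
Qed.

Lemma flat n (P : 'cV[R]_n -> Prop) c del z g eps :
  (forall y, P y -> dotp c y <= del) -> dotp c z = del -> 0 < eps ->
  P (z + eps *: g) -> P (z - eps *: g) -> dotp c g = 0.
Proof.
move=> hle cz e0 Pp Pm.
have := hle _ Pp; have := hle _ Pm.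
rewrite !dotpD dotpN !dotpZ cz => h1 h2.
set x := dotp c g in h1 h2 *.
apply/eqP; rewrite eq_le -(pmulr_rle0 _ e0) -(pmulr_rge0 _ e0).
apply/andP; split; lra.
Qed.

Lemma adjN m n (M : 'M[R]_(m, n)) r v w :
  adjacent (std_poly M r) v w ->
  forall g, M *m g = 0 -> sub2 g v w -> exists mu, g = mu *: (w - v).
Proof.
move=> [Vv [Vw [nvw [c [del [hle heq]]]]]] g Mg sg.
have Pv := Vv.1; have Pw := Vw.1.
set h : R := 2^-1.
have h01 : 0 <= h <= 1 by rewrite /h; apply/andP; split; lra.
set mm := h *: v + (1 - h) *: w.
have Pm : std_poly M r mm by apply: std_conv.
have cm : dotp c mm = del.
  by apply/(heq _ Pm); exists h; split.
have sm : sub2 g mm mm.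
  move=> j mj _; apply: sg.
    move: mj; rewrite !mxE /h => mj.
    have := Pv.2 j; have := Pw.2 j; lra.
  move: mj; rewrite !mxE /h => mj.
  have := Pv.2 j; have := Pw.2 j; lra.
have [eps e0 he] := perturb Pm.2 sm.
have Pp : std_poly M r (mm + eps *: g).
  split; first by rewrite mulmxDr -scalemxAr Mg scaler0 addr0 Pm.1.
  by move=> i; case: (he i); rewrite /mm !mxE.
have Pn : std_poly M r (mm - eps *: g).
  split; first by rewrite mulmxBr -scalemxAr Mg scaler0 subr0 Pm.1.
  by move=> i; case: (he i); rewrite /mm !mxE.
have cg := flat hle cm e0 Pp Pn.
have [t [t01 et]] : exists t : R, 0 <= t <= 1 /\ mm + eps *: g = t *: v + (1 - t) *: w.
  by apply/(heq _ Pp); rewrite dotpD dotpZ cg mulr0 addr0.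
exists ((h - t) / eps); apply/matrixP => i j.
move/matrixP: et => /(_ i j); rewrite !mxE /h => e.
have en : eps != 0 by rewrite gt_eqF.
apply: (mulfI en); rewrite mulrA mulrCA divff // mulr1.
lra.
Qed.

Lemma adjS m n (M : 'M[R]_(m, n)) r v w :
  is_vertex (std_poly M r) v -> is_vertex (std_poly M r) w -> v <> w ->
  (forall g, M *m g = 0 -> sub2 g v w -> exists mu, g = mu *: (w - v)) ->
  adjacent (std_poly M r) v w.
Proof.
move=> Vv Vw nvw hk; do 3!split=> //.
have [Mv v0] := Vv.1; have [Mw w0] := Vw.1.
exists (zrow (fun j => (v j 0 == 0) && (w j 0 == 0))), 0; split.
  by move=> y [_ y0]; apply: zrow_le.
move=> y [My y0]; rewrite zrow_eq0 //; split; last first.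
  move=> [t [_ ->]] j /andP [/eqP vj /eqP wj].
  by rewrite !mxE vj wj !mulr0 addr0.
move=> hz.
have [mu emu] : exists mu, y - v = mu *: (w - v).
  apply: hk; first by rewrite mulmxBr My Mv subrr.
  by move=> j vj wj; rewrite !mxE (hz j) ?vj ?wj ?eqxx // subrr.
have ey : y = (1 - mu) *: v + (1 - (1 - mu)) *: w.
  apply/matrixP => i j; move/matrixP: emu => /(_ i j); rewrite !mxE => e.
  lra.
case: (ltP mu 0) => hmu.
  exfalso; apply: nvw; symmetry.
  apply: (@extreme _ (std_poly M r) v y w ((1 - mu)^-1)) => //.
  - by rewrite invr_gt0; lra.
  - by rewrite invf_lt1; lra.
  apply/matrixP => i j; move/matrixP: emu => /(_ i j); rewrite !mxE => e.
  have hn : 1 - mu != 0 by rewrite gt_eqF //; lra.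
  apply: (mulfI hn); rewrite mulrDr !mulrA divff // mul1r mulrBr mulr1 divff //.
  lra.
case: (leP mu 1) => hmu1.
  by exists (1 - mu); split=> //; apply/andP; split; lra.
exfalso; apply: nvw.
apply: (@extreme _ (std_poly M r) w y v (mu^-1)) => //.
- by rewrite invr_gt0; lra.
- by rewrite invf_lt1; lra.
apply/matrixP => i j; move/matrixP: emu => /(_ i j); rewrite !mxE => e.
have hn : mu != 0 by rewrite gt_eqF //; lra.
apply: (mulfI hn); rewrite mulrDr !mulrA divff // mul1r mulrBr mulr1 divff //.
lra.
Qed.


Definition Nz n (z d : 'cV[R]_n) := #|[set j | (z j 0 == 0) && (d j 0 != 0)]|.

Lemma pivot_step m n (M : 'M[R]_(m, n)) (f : 'rV[R]_n) z d :
  indep M z -> M *m d = 0 -> (forall j, z j 0 = 0 -> 0 <= d j 0) -> dotp f d < 0 ->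
  ~ edgeDir M z d ->
  exists d', [/\ M *m d' = 0, (forall j, z j 0 = 0 -> 0 <= d' j 0), dotp f d' < 0
                 & (Nz z d' < Nz z d)%N].
Proof.
move=> hi Md d0 fd ne.
have [g [Mg [sg ng]]] : exists g, M *m g = 0 /\ sub2 g z d /\ ~ exists mu, g = mu *: d.
  apply: NNPP => hn; apply: ne => g Mg sg; apply: NNPP => hg; apply: hn.
  by exists g.
have fdn : dotp f d != 0 by rewrite lt_eqF.
set g' := g - (dotp f g / dotp f d) *: d.
have Mg' : M *m g' = 0 by rewrite mulmxBr -scalemxAr Mg Md scaler0 subrr.
have sg' : sub2 g' z d by move=> j zj dj; rewrite !mxE (sg j zj dj) dj mulr0 subrr.
have fg' : dotp f g' = 0 by rewrite dotpB dotpZ divfK // subrr.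
have ng' : ~ exists mu, g' = mu *: d.
  move=> [mu emu]; apply: ng; exists (mu + dotp f g / dotp f d).
  by rewrite scalerDl -emu subrK.
have [j1 /andP [/eqP zj1 gj1]] : exists j, (z j 0 == 0) && (g' j 0 != 0).
  apply/existsP; apply: contraT; rewrite negb_exists => /forallP hall; exfalso.
  apply: ng'; exists 0; rewrite scale0r; apply: hi => // j zj _.
  by move: (hall j); rewrite zj eqxx /= negbK => /eqP.
have [h [Mh sh fh [j2 [zj2 hj2]]]] : exists h, [/\ M *m h = 0, sub2 h z d, dotp f h = 0
     & exists j, z j 0 = 0 /\ 0 < h j 0].
  case: (ltP 0 (g' j1 0)) => hg.
    by exists g'; split=> //; exists j1.
  exists (- g'); split.
  - by rewrite mulmxN Mg' oppr0.
  - by move=> j zj dj; rewrite mxE sg' // oppr0.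
  - by rewrite dotpN fg' oppr0.
  by exists j1; split=> //; rewrite mxE oppr_gt0 lt_neqAle gj1 hg.
have ex2 : exists j, (z j 0 == 0) /\ - h j 0 < 0.
  by exists j2; rewrite zj2 eqxx oppr_lt0.
have [mu [mu0 [feas [j0 [Pj0 hj0 ej0]]]]] :=
  @ray_exitP n (fun j => z j 0 == 0) (fun j => d j 0) (fun j => - h j 0)
    (fun j zj => d0 j (eqP zj)) ex2.
exists (d - mu *: h); split.
- by rewrite mulmxBr -scalemxAr Mh Md scaler0 subrr.
- by move=> j zj; rewrite !mxE -mulrN; apply: feas; apply/eqP.
- by rewrite dotpB dotpZ fh mulr0 subr0.
rewrite /Nz; apply: proper_card; apply/properP; split.
  apply/subsetP => j; rewrite !inE => /andP [zj]; rewrite zj /=.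
  apply: contraNN => /eqP dj; rewrite !mxE (sh j (eqP zj) dj) dj mulr0 subrr.
  by [].
exists j0; rewrite !inE Pj0 /=.
  apply/eqP => dj; have := sh j0 (eqP Pj0) dj; move: hj0; rewrite oppr_lt0.
  by move=> /gt_eqF /eqP.
by rewrite !mxE -mulrN ej0 eqxx.
Qed.

Lemma pivot m n (M : 'M[R]_(m, n)) r (f : 'rV[R]_n) z p :
  is_vertex (std_poly M r) z -> std_poly M r p -> dotp f p < dotp f z ->
  exists d, [/\ M *m d = 0, (forall j, z j 0 = 0 -> 0 <= d j 0), dotp f d < 0
                & edgeDir M z d].
Proof.
move=> Vz [Mp p0] fpz.
have hi := vertex_indep Vz; have [Mz z0] := Vz.1.
suff H : forall k d, (Nz z d <= k)%N -> M *m d = 0 -> (forall j, z j 0 = 0 -> 0 <= d j 0) ->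
   dotp f d < 0 -> exists d, [/\ M *m d = 0, (forall j, z j 0 = 0 -> 0 <= d j 0),
     dotp f d < 0 & edgeDir M z d].
  apply: (H _ (p - z) (leqnn _)).
  - by rewrite mulmxBr Mp Mz subrr.
  - by move=> j zj; rewrite !mxE zj subr0.
  - by rewrite dotpB subr_lt0.
elim=> [|k IH] d hk Md d0 fd.
  case: (classic (edgeDir M z d)) => he; first by exists d.
  have [d' [_ _ _ lt]] := pivot_step hi Md d0 fd he.
  by move: lt; rewrite ltnNge (leq_trans hk (leq0n _)).
case: (classic (edgeDir M z d)) => he; first by exists d.
have [d' [Md' d0' fd' lt]] := pivot_step hi Md d0 fd he.
by apply: (IH d') => //; rewrite -ltnS (leq_trans lt hk).
Qed.


Lemma bnd_vertex m n (M : 'M[R]_(m, n)) r z d x :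
  edgeDir M z d -> std_poly M r x ->
  (forall j, z j 0 = 0 -> d j 0 = 0 -> x j 0 = 0) ->
  (exists j, x j 0 = 0 /\ d j 0 != 0) -> is_vertex (std_poly M r) x.
Proof.
move=> he Px hs [j0 [xj0 dj0]]; apply: indep_vertex => // g Mg sg.
have [mu emu] : exists mu, g = mu *: d.
  by apply: he => // j zj dj; apply: sg; apply: hs.
have : g j0 0 = 0 by apply: sg.
subst g; rewrite mxE => /eqP; rewrite mulf_eq0 (negbTE dj0) orbF => /eqP mu0.
by rewrite mu0 scale0r.
Qed.

Lemma move_vertex m n (M : 'M[R]_(m, n)) r z d :
  is_vertex (std_poly M r) z -> M *m d = 0 -> (forall j, z j 0 = 0 -> 0 <= d j 0) ->
  edgeDir M z d -> (exists j, d j 0 < 0) ->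
  exists t, [/\ 0 < t, (forall j, 0 <= z j 0 + t * d j 0) &
                is_vertex (std_poly M r) (z + t *: d)].
Proof.
move=> Vz Md d0 he [j1 dj1].
have [Mz z0] := Vz.1.
have ex1 : exists j, predT j /\ d j 0 < 0 by exists j1.
have [t [t0 [feas [j0 [_ dj0 ej0]]]]] :=
  @ray_exitP n predT (fun j => z j 0) (fun j => d j 0) (fun j _ => z0 j) ex1.
have zj0 : z j0 0 != 0.
  by apply/eqP => zj; have := d0 _ zj; rewrite leNgt dj0.
have tp : 0 < t.
  rewrite lt_neqAle t0 andbT; apply/eqP => tz.
  by move: ej0; rewrite -tz mul0r addr0; apply/eqP.
exists t; split=> //; first by move=> j; apply: feas.
apply: (bnd_vertex he).
- split; first by rewrite mulmxDr -scalemxAr Md scaler0 addr0.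
  by move=> i; rewrite !mxE; apply: feas.
- by move=> j zj dj; rewrite !mxE zj dj mulr0 addr0.
by exists j0; rewrite !mxE ej0 lt_eqF.
Qed.

Definition supp n (w : 'cV[R]_n) := [set j | w j 0 != 0].

Lemma vertex_supp m n (M : 'M[R]_(m, n)) r w z :
  is_vertex (std_poly M r) w -> is_vertex (std_poly M r) z -> supp w = supp z -> w = z.
Proof.
move=> Vw Vz es; apply/eqP; rewrite -subr_eq0; apply/eqP.
apply: (vertex_indep Vz).
  by rewrite mulmxBr Vw.1.1 Vz.1.1 subrr.
move=> j zj _; rewrite !mxE zj subr0.
have : j \notin supp z by rewrite inE zj eqxx.
by rewrite -es inE negbK => /eqP.
Qed.

Definition meas m n (M : 'M[R]_(m, n)) r (f : 'rV[R]_n) z :=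
  #|[set S : {set 'I_n} | `[< exists w, [/\ is_vertex (std_poly M r) w, supp w = S
      & dotp f w < dotp f z] >]]|.

Lemma meas_lt m n (M : 'M[R]_(m, n)) r f z z' :
  is_vertex (std_poly M r) z' -> dotp f z' < dotp f z -> (meas M r f z' < meas M r f z)%N.
Proof.
move=> Vz' lt; apply: proper_card; apply/properP; split.
  apply/subsetP => S; rewrite !inE => /asboolP [w [Vw sw fw]].
  by apply/asboolP; exists w; split=> //; apply: lt_trans lt.
exists (supp z'); rewrite !inE; first by apply/asboolP; exists z'.
apply/negP => /asboolP [w [Vw sw fw]].
by move: fw; rewrite (vertex_supp Vw Vz' sw) ltxx.
Qed.

Lemma descent m n (M : 'M[R]_(m, n)) r (f : 'rV[R]_n) z :
  is_vertex (std_poly M r) z ->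
  exists z', is_vertex (std_poly M r) z' /\
    ((forall p, std_poly M r p -> dotp f z' <= dotp f p) \/
     exists d, [/\ M *m d = 0, (forall j, 0 <= d j 0), dotp f d < 0 & edgeDir M z' d]).
Proof.
move: {2}(meas M r f z) (leqnn (meas M r f z)) => k.
elim: k z => [|k IH] z hk Vz.
  all: case: (classic (forall p, std_poly M r p -> dotp f z <= dotp f p)) => hmin;
    first by exists z; split=> //; left.
  all: have [p [Pp fp]] : exists p, std_poly M r p /\ dotp f p < dotp f z
    by apply: NNPP => hn; apply: hmin => p Pp; rewrite leNgt; apply/negP => lt;
       apply: hn; exists p.
  all: have [d [Md d0 fd he]] := pivot Vz Pp fp.
  all: case: (classic (exists j, d j 0 < 0)) => hneg; last first.
  1,3: by exists z; split=> //; right; exists d; split=> // j; rewrite leNgt;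
         apply/negP => h; apply: hneg; exists j.
  all: have [t [t0 feas Vz']] := move_vertex Vz Md d0 he hneg.
  all: have lt : dotp f (z + t *: d) < dotp f z
    by rewrite dotpD dotpZ gtrDl pmulr_rlt0.
  all: have := meas_lt Vz' lt.
  - by rewrite ltnNge (leq_trans hk (leq0n _)).
  - move=> hlt.
    have hk' : (meas M r f (z + t *: d) <= k)%N by rewrite -ltnS (leq_trans hlt hk).
    have [z'' [V'' H'']] := IH _ hk' Vz'.
    by exists z''.
Qed.


Definition Int n (q d : 'cV[R]_n) (l : R) :=
  forall j, (q j 0 != 0) || (d j 0 != 0) -> 0 < q j 0 + l * d j 0.

Lemma descentT m n (M : 'M[R]_(m, n)) r (f : 'rV[R]_n) z x1 :
  is_vertex (std_poly M r) z -> std_poly M r x1 -> dotp f x1 < dotp f z ->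
  exists q, [/\ is_vertex (std_poly M r) q, dotp f q <= dotp f z &
    dotp f q = dotp f x1 \/ (dotp f x1 < dotp f q /\
      exists d, [/\ M *m d = 0, (forall j, q j 0 = 0 -> 0 <= d j 0), dotp f d < 0,
        edgeDir M q d & Int q d ((dotp f x1 - dotp f q) / dotp f d)])].
Proof.
move: {2}(meas M r f z) (leqnn (meas M r f z)) => k.
elim: k z => [|k IH] z hk Vz Px1 fx.
  all: have [d [Md d0 fd he]] := pivot Vz Px1 fx.
  all: set l := (dotp f x1 - dotp f z) / dotp f d.
  all: have l0 : 0 < l by rewrite /l -divrNN divr_gt0 ?oppr_gt0 //; lra.
  all: have lfd : l * dotp f d = dotp f x1 - dotp f z by rewrite /l divfK // lt_eqF.
  all: case: (classic (Int z d l)) => hint.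
  1,3: by exists z; split=> //; right; split=> //; exists d.
  all: have [j [hj bad]] : exists j, ((z j 0 != 0) || (d j 0 != 0)) /\ z j 0 + l * d j 0 <= 0
    by apply: NNPP => hn; apply: hint => j hj; rewrite ltNge; apply/negP => h;
       apply: hn; exists j.
  all: have z0 := (Vz.1).2.
  all: have dj : d j 0 < 0.
  1,3: rewrite ltNge; apply/negP => dj; move: hj; have := z0 j.
  1,2: move: bad dj; move: (z j 0) (d j 0) => a b bad dj za.
  1,2: have ea : a = 0 by nra.
  1,2: have eb : b = 0 by subst a; nra.
  1,2: by rewrite ea eb eqxx.
  all: have [t [t0 feas Vz']] := move_vertex Vz Md d0 he (ex_intro _ j dj).
  all: have tl : t <= l by have := feas j; nra.
  all: have fz' : dotp f (z + t *: d) = dotp f z + t * dotp f d by rewrite dotpD dotpZ.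
  all: have ge : dotp f x1 <= dotp f (z + t *: d) by rewrite fz'; nra.
  all: have lt : dotp f (z + t *: d) < dotp f z by rewrite fz'; nra.
  all: case: (eqVneq (dotp f (z + t *: d)) (dotp f x1)) => heq.
  1,3: by exists (z + t *: d); split=> //; [exact: ltW | left].
  all: have := meas_lt Vz' lt.
  - by rewrite ltnNge (leq_trans hk (leq0n _)).
  - move=> hlt.
    have hk' : (meas M r f (z + t *: d) <= k)%N by rewrite -ltnS (leq_trans hlt hk).
    have gt : dotp f x1 < dotp f (z + t *: d) by rewrite lt_neqAle eq_sym heq ge.
    have [q [Vq fq H]] := IH _ hk' Vz' Px1 gt.
    by exists q; split=> //; apply: (le_trans fq); exact: ltW.
Qed.


Lemma walk_refl n (P : 'cV[R]_n -> Prop) k v : walk_le P k v v.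
Proof. by case: k => [|k] //=; left. Qed.

Lemma walk_mono n (P : 'cV[R]_n -> Prop) k k' v w :
  (k <= k')%N -> walk_le P k v w -> walk_le P k' v w.
Proof.
elim: k k' v => [|k IH] [|k'] v //= hk.
- by move=> ->; left.
- case=> [->|[u [adj wk]]]; first by left.
  by right; exists u; split=> //; apply: IH.
Qed.

Lemma walk_trans n (P : 'cV[R]_n -> Prop) k1 k2 u v w :
  walk_le P k1 u v -> walk_le P k2 v w -> walk_le P (k1 + k2) u w.
Proof.
elim: k1 u => [|k1 IH] u /=.
  by move=> ->; rewrite add0n.
case=> [->|[u' [adj wk]]] h2.
  change (walk_le P (k1 + k2).+1 v w).
  by apply: (walk_mono _ h2); apply: leq_trans (leq_addl k1 k2) _.
right; exists u'; split=> //; exact: IH.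
Qed.

Lemma walk_adj n (P : 'cV[R]_n -> Prop) v w : adjacent P v w -> walk_le P 1 v w.
Proof. by move=> h; right; exists w; split. Qed.

Lemma sub2_col n1 n2 (gx x x' : 'cV[R]_n1) (gy y y' : 'cV[R]_n2) :
  sub2 (col_mx gx gy) (col_mx x y) (col_mx x' y') <-> sub2 gx x x' /\ sub2 gy y y'.
Proof.
split.
  move=> h; split=> j h1 h2.
    by have := h (lshift n2 j); rewrite !col_mxEu; apply.
  by have := h (rshift n1 j); rewrite !col_mxEd; apply.
move=> [hx hy] j; rewrite -(splitK j); case: (split j) => k /=.
  by rewrite !col_mxEu; apply: hx.
by rewrite !col_mxEd; apply: hy.
Qed.

Lemma col_nonneg n1 n2 (x : 'cV[R]_n1) (y : 'cV[R]_n2) :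
  (forall i, 0 <= col_mx x y i 0) <-> (forall i, 0 <= x i 0) /\ (forall i, 0 <= y i 0).
Proof.
split.
  move=> h; split=> j.
    by have := h (lshift n2 j); rewrite col_mxEu.
  by have := h (rshift n1 j); rewrite col_mxEd.
move=> [hx hy] j; rewrite -(splitK j); case: (split j) => k /=.
  by rewrite col_mxEu.
by rewrite col_mxEd.
Qed.

Lemma m11P (X Y : 'M[R]_1) : X = Y <-> X 0 0 = Y 0 0.
Proof.
split=> [->//|h]; apply/matrixP => i j.
by rewrite !ord1.
Qed.

Lemma dotp_m11 n (c : 'rV[R]_n) x : c *m x = (dotp c x)%:M.
Proof. by apply/m11P; rewrite dotpE [RHS]mxE. Qed.


Section Blocks.
Variables (m1 n1 m2 n2 : nat) (A : 'M[R]_(m1, n1)) (a : 'rV[R]_n1)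
  (b : 'rV[R]_n2) (B : 'M[R]_(m2, n2)) (cA : 'cV[R]_m1) (cB : 'cV[R]_m2) (ca cb : R).

Local Notation RM := (Rmat A a b B).
Local Notation RP := (std_poly (Rmat A a b B) (Rrhs cA ca cb cB)).

Lemma Rmul (x : 'cV[R]_n1) (y : 'cV[R]_n2) :
  RM *m col_mx x y = col_mx (A *m x) (col_mx (a *m x + b *m y) (B *m y)).
Proof. by rewrite /Rmat !mul_col_mx !mul_row_col !mul0mx addr0 add0r. Qed.

Lemma RpolyP (x : 'cV[R]_n1) (y : 'cV[R]_n2) : RP (col_mx x y) <->
  [/\ std_poly A cA x, std_poly B cB y & dotp a x + dotp b y = ca + cb].
Proof.
rewrite /std_poly Rmul /Rrhs col_nonneg; split.
  move=> [/eq_col_mx [hA /eq_col_mx [hab hB]] [x0 y0]]; split=> //.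
  by move/m11P: hab; rewrite !dotp_m11 !mxE /= mulr1n.
move=> [[hA x0] [hB y0] hab]; split=> //.
by rewrite hA hB; congr col_mx; congr col_mx; apply/m11P; rewrite !dotp_m11 !mxE /= mulr1n.
Qed.

Lemma Rker (gx : 'cV[R]_n1) (gy : 'cV[R]_n2) : RM *m col_mx gx gy = 0 <->
  [/\ A *m gx = 0, B *m gy = 0 & dotp a gx + dotp b gy = 0].
Proof.
rewrite Rmul -(col_mx0 _ m1 (1 + m2)) -(col_mx0 _ 1 m2); split.
  move=> /eq_col_mx [hA /eq_col_mx [hab hB]]; split=> //.
  by move/m11P: hab; rewrite !dotp_m11 !mxE /= mulr1n.
move=> [hA hB hab]; rewrite hA hB; congr col_mx; congr col_mx.
by apply/m11P; rewrite !dotp_m11 !mxE /= mulr1n hab.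
Qed.

Definition Rkcond (gx : 'cV[R]_n1) (gy : 'cV[R]_n2) := [/\ A *m gx = 0, B *m gy = 0 & dotp a gx + dotp b gy = 0].

Lemma RVert (x : 'cV[R]_n1) (y : 'cV[R]_n2) : RP (col_mx x y) ->
  (forall gx gy, Rkcond gx gy -> sub2 gx x x -> sub2 gy y y -> gx = 0 /\ gy = 0) ->
  is_vertex RP (col_mx x y).
Proof.
move=> HP hk; apply: indep_vertex => // g.
rewrite -(vsubmxK g) Rker sub2_col => hker [s1 s2].
by have [-> ->] := hk _ _ hker s1 s2; rewrite col_mx0.
Qed.

Lemma RindepE (x : 'cV[R]_n1) (y : 'cV[R]_n2) : is_vertex RP (col_mx x y) ->
  forall gx gy, Rkcond gx gy -> sub2 gx x x -> sub2 gy y y -> gx = 0 /\ gy = 0.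
Proof.
move=> /vertex_indep hi gx gy hk s1 s2.
have : col_mx gx gy = 0 by apply: hi; [apply/Rker | apply/sub2_col].
by rewrite -(col_mx0 _ n1 n2) => /eq_col_mx.
Qed.

Lemma RAdj (x x' : 'cV[R]_n1) (y y' : 'cV[R]_n2) : is_vertex RP (col_mx x y) -> is_vertex RP (col_mx x' y') ->
  col_mx x y <> col_mx x' y' ->
  (forall gx gy, Rkcond gx gy -> sub2 gx x x' -> sub2 gy y y' ->
     exists mu, gx = mu *: (x' - x) /\ gy = mu *: (y' - y)) ->
  adjacent RP (col_mx x y) (col_mx x' y').
Proof.
move=> V1 V2 ne hk; apply: adjS => // g.
rewrite -(vsubmxK g) Rker sub2_col => hker [s1 s2].
have [mu [e1 e2]] := hk _ _ hker s1 s2.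
by exists mu; rewrite e1 e2 opp_col_mx add_col_mx scale_col_mx.
Qed.


Section Line.
Variables (q d : 'cV[R]_n1).
Hypotheses (Vq : is_vertex (std_poly A cA) q) (Ad : A *m d = 0)
  (hed : edgeDir A q d) (ad0 : dotp a d != 0) (dq : forall j, q j 0 = 0 -> 0 <= d j 0).

Lemma q0 j : 0 <= q j 0.
Proof. exact: (Vq.1).2. Qed.

Lemma Int_nonneg l : Int q d l -> forall j, 0 <= (q + l *: d) j 0.
Proof.
move=> hI j; rewrite !mxE.
case: (boolP ((q j 0 != 0) || (d j 0 != 0))) => h; first exact/ltW/hI.
by move: h; rewrite negb_or !negbK => /andP [/eqP -> /eqP ->]; rewrite mulr0 addr0.
Qed.

Lemma line_PA l : (forall j, 0 <= (q + l *: d) j 0) -> std_poly A cA (q + l *: d).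
Proof.
by move=> h; split=> //; rewrite mulmxDr -scalemxAr Ad scaler0 addr0 (Vq.1).1.
Qed.

Lemma line_sub2 (gx : 'cV[R]_n1) l l' :
  sub2 gx (q + l *: d) (q + l' *: d) -> sub2 gx q d.
Proof. by move=> h j qj dj; apply: h; rewrite !mxE qj dj mulr0 addr0. Qed.

Lemma Rvert_line l y : Int q d l -> is_vertex (std_poly B cB) y ->
  dotp a (q + l *: d) + dotp b y = ca + cb -> is_vertex RP (col_mx (q + l *: d) y).
Proof.
move=> hI Vy hr; apply: RVert.
  by apply/RpolyP; split=> //; [apply: line_PA; apply: Int_nonneg | case: Vy].
move=> gx gy [hA hB hab] s1 s2.
have gy0 : gy = 0 by apply: (vertex_indep Vy).
have [nu enu] := hed hA (line_sub2 s1).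
move: hab; rewrite gy0 dotp0 addr0 enu dotpZ => /eqP; rewrite mulf_eq0 (negbTE ad0) orbF.
by move/eqP => nu0; rewrite nu0 scale0r.
Qed.

Lemma Radj_line l l' y y' e t :
  is_vertex RP (col_mx (q + l *: d) y) -> is_vertex RP (col_mx (q + l' *: d) y') ->
  col_mx (q + l *: d) y <> col_mx (q + l' *: d) y' ->
  B *m e = 0 -> edgeDir B y e -> 0 < t -> y' = y + t *: e ->
  (l - l') * dotp a d = t * dotp b e ->
  adjacent RP (col_mx (q + l *: d) y) (col_mx (q + l' *: d) y').
Proof.
move=> V1 V2 ne Be hee t0 ey hrel; apply: RAdj => // gx gy [hA hB hab] s1 s2.
have [nu enu] := hed hA (line_sub2 s1).
have [mu emu] : exists mu, gy = mu *: e.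
  apply: hee => // j yj ej; apply: s2 => //; rewrite ey !mxE yj ej mulr0 addr0.
  by [].
have tn : t != 0 by rewrite gt_eqF.
have hnu : nu = mu / t * (l' - l).
  move: hab; rewrite enu emu !dotpZ => /eqP; rewrite addr_eq0 => /eqP hab.
  apply: (mulIf ad0); rewrite hab.
  have hbe : dotp b e = (l - l') * dotp a d / t by rewrite hrel mulrC mulKf.
  rewrite hbe; field; exact: tn.
exists (mu / t); split.
  apply/matrixP => i j; rewrite enu hnu !mxE; ring.
by rewrite emu ey addrAC subrr add0r scalerA divfK.
Qed.

Lemma exitL l l'' : Int q d l -> ~ Int q d l'' ->
  exists th, [/\ 0 < th, th <= 1,
    (forall j, 0 <= q j 0 + (l + th * (l'' - l)) * d j 0) &
    exists j, d j 0 != 0 /\ q j 0 + (l + th * (l'' - l)) * d j 0 = 0].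
Proof.
move=> hI hn.
have [j1 [Pj1 bad]] : exists j, ((q j 0 != 0) || (d j 0 != 0)) /\ q j 0 + l'' * d j 0 <= 0.
  apply: NNPP => hh; apply: hn => j hj; rewrite ltNge; apply/negP => h.
  by apply: hh; exists j.
set P := fun j => (q j 0 != 0) || (d j 0 != 0).
have z0 : forall j, P j -> 0 <= q j 0 + l * d j 0 by move=> j /hI /ltW.
have ex1 : exists j, P j /\ (l'' - l) * d j 0 < 0.
  exists j1; split=> //; have := hI _ Pj1; lra.
have [t [t0 [feas [j0 [Pj0 dj0 ej0]]]]] :=
  @ray_exitP n1 P (fun j => q j 0 + l * d j 0) (fun j => (l'' - l) * d j 0) z0 ex1.
have tp : 0 < t.
  rewrite lt_neqAle t0 andbT; apply/eqP => tz; move: ej0; rewrite -tz mul0r addr0.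
  by move/eqP; rewrite gt_eqF // hI.
exists t; split=> //.
- have := feas _ Pj1; have := hI _ Pj1.
  move: bad; move: (q j1 0) (d j1 0) => u w bad h1 h2.
  have h3 : (l'' - l) * w < 0 by lra.
  nra.
- move=> j; case: (boolP (P j)) => Pj.
    suff -> : q j 0 + (l + t * (l'' - l)) * d j 0 =
       q j 0 + l * d j 0 + t * ((l'' - l) * d j 0) by apply: feas.
    ring.
  move: Pj; rewrite /P negb_or !negbK => /andP [/eqP -> /eqP ->].
  by rewrite mulr0 addr0.
exists j0; split.
  by apply/eqP => dz; move: dj0; rewrite dz mulr0 ltxx.
rewrite -ej0; ring.
Qed.


Definition Xv (z : 'cV[R]_(n1 + n2)) :=
  is_vertex RP z /\ is_vertex (std_poly A cA) (usubmx z).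

Lemma d_out : exists j, d j 0 != 0 /\ q j 0 = 0.
Proof.
apply: NNPP => hn.
have d0 : d = 0.
  apply: (vertex_indep Vq) => // j qj _; apply/eqP; apply: contraT => dj.
  by exfalso; apply: hn; exists j.
by move: ad0; rewrite d0 dotp0 eqxx.
Qed.

Lemma l_pos l : Int q d l -> 0 < l.
Proof.
move=> hI; have [j [dj qj]] := d_out.
have := hI j; rewrite dj orbT qj add0r => /(_ isT) h.
have := dq qj; move: h dj; move: (d j 0) => w h dj hw.
have wp : 0 < w by rewrite lt_def dj hw.
nra.
Qed.

Lemma relE l y : dotp a (q + l *: d) + dotp b y = dotp a q + l * dotp a d + dotp b y.
Proof. by rewrite dotpD dotpZ. Qed.

Lemma RstepB l y e t l' :
  Int q d l -> is_vertex (std_poly B cB) y ->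
  dotp a (q + l *: d) + dotp b y = ca + cb ->
  B *m e = 0 -> edgeDir B y e -> 0 < t -> std_poly B cB (y + t *: e) ->
  dotp b e != 0 -> (l - l') * dotp a d = t * dotp b e ->
  (forall j, 0 <= q j 0 + l' * d j 0) -> (exists j, d j 0 != 0 /\ q j 0 + l' * d j 0 = 0) ->
  Xv (col_mx (q + l' *: d) (y + t *: e)) /\
  adjacent RP (col_mx (q + l *: d) y) (col_mx (q + l' *: d) (y + t *: e)).
Proof.
move=> hI Vy hr Be hee t0 Py' be0 hrel feas [j0 [dj0 hj0]].
have PAx' : std_poly A cA (q + l' *: d) by apply: line_PA => j; rewrite !mxE.
have VAx' : is_vertex (std_poly A cA) (q + l' *: d).
  apply: (bnd_vertex hed PAx').
    by move=> j qj dj; rewrite !mxE qj dj mulr0 addr0.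
  by exists j0; rewrite !mxE.
have rel' : dotp a (q + l' *: d) + dotp b (y + t *: e) = ca + cb.
  move: hr; rewrite !relE dotpD dotpZ -hrel => <-; ring.
have V2 : is_vertex RP (col_mx (q + l' *: d) (y + t *: e)).
  apply: RVert; first by apply/RpolyP.
  move=> gx gy [hA hB hab] s1 s2.
  have gx0 : gx = 0 by apply: (vertex_indep VAx').
  have [mu emu] : exists mu, gy = mu *: e.
    apply: hee => // j yj ej; apply: s2; rewrite !mxE yj ej mulr0 addr0 //.
  split=> //; move: hab; rewrite gx0 dotp0 add0r emu dotpZ => /eqP.
  by rewrite mulf_eq0 (negbTE be0) orbF => /eqP ->; rewrite scale0r.
split; first by split=> //; rewrite col_mxKu.
have t0' := t0; apply: Radj_line hee t0 _ hrel => //.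
- exact: Rvert_line.
- move=> /eq_col_mx [_] /eqP; rewrite addrC -subr_eq subrr eq_sym scaler_eq0.
  by rewrite (gt_eqF t0') /= => /eqP e0; move: be0; rewrite e0 dotp0 eqxx.
Qed.

Lemma adj_edge y u : adjacent (std_poly B cB) y u ->
  [/\ B *m (u - y) = 0, edgeDir B y (u - y), u <> y & is_vertex (std_poly B cB) u].
Proof.
move=> hadj; have hk := adjN hadj.
case: hadj => Vy [Vu [ne _]].
split=> //.
- by rewrite mulmxBr (Vu.1).1 (Vy.1).1 subrr.
- move=> g Bg sg; apply: hk => // j yj uj; apply: sg; rewrite // !mxE yj uj subrr.
  by [].
- by move=> e; apply: ne.
Qed.

Lemma liftB k y y' : walk_le (std_poly B cB) k y y' ->
  forall l, Int q d l -> is_vertex (std_poly B cB) y ->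
  dotp a (q + l *: d) + dotp b y = ca + cb ->
  (exists z', Xv z' /\ walk_le RP k (col_mx (q + l *: d) y) z') \/
  (exists l', [/\ Int q d l', dotp a (q + l' *: d) + dotp b y' = ca + cb &
      walk_le RP k (col_mx (q + l *: d) y) (col_mx (q + l' *: d) y')]).
Proof.
elim: k y => [|k IH] y /=.
  by move=> -> l hI Vy hr; right; exists l; split.
case=> [-> l hI Vy hr|[u [hadj wk]] l hI Vy hr].
  by right; exists l; split=> //; left.
have [Be hee neu Vu] := adj_edge hadj.
set kap := - dotp b (u - y) / dotp a d.
have hrel : (l - (l + kap)) * dotp a d = 1 * dotp b (u - y).
  by rewrite /kap mul1r; field; exact: ad0.
case: (classic (Int q d (l + kap))) => hI'.
  have ru : dotp a (q + (l + kap) *: d) + dotp b u = ca + cb.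
    move: hr hrel; rewrite !relE mul1r dotpB => <- hrel.
    have : dotp b u = dotp b y + (l - (l + kap)) * dotp a d by rewrite hrel; ring.
    move=> ->; ring.
  have adjR : adjacent RP (col_mx (q + l *: d) y) (col_mx (q + (l + kap) *: d) u).
    have eu : u = y + 1 *: (u - y) by rewrite scale1r addrC subrK.
    have := @Radj_line l (l + kap) y u (u - y) 1 (Rvert_line hI Vy hr)
      (Rvert_line hI' Vu ru) _ Be hee ltr01 eu hrel.
    apply; move=> /eq_col_mx [_ h]; exact: neu.
  case: (IH u wk (l + kap) hI' Vu ru) => [[z' [Xz' wz]]|[l' [hI'' hr' wz]]].
    by left; exists z'; split=> //; right; exists (col_mx (q + (l + kap) *: d) u).
  by right; exists l'; split=> //; right; exists (col_mx (q + (l + kap) *: d) u).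
have [th [th0 th1 feas hit]] := exitL hI hI'.
have be0 : dotp b (u - y) != 0.
  apply/eqP => be0; apply: hI'; suff -> : l + kap = l by [].
  by rewrite /kap be0 oppr0 mul0r addr0.
have Py' : std_poly B cB (y + th *: (u - y)).
  have -> : y + th *: (u - y) = th *: u + (1 - th) *: y.
    by apply/matrixP => i j; rewrite !mxE; ring.
  apply: std_conv; [exact: Vu.1 | exact: Vy.1 | apply/andP; split=> //; exact: ltW].
have hrel2 : (l - (l + th * (l + kap - l))) * dotp a d = th * dotp b (u - y).
  move: hrel; rewrite mul1r => <-; ring.
have [Xz adjz] := RstepB hI Vy hr Be hee th0 Py' be0 hrel2 feas hit.
left; exists (col_mx (q + (l + th * (l + kap - l)) *: d) (y + th *: (u - y))); split=> //.
by right; eexists; split; [exact: adjz | exact: walk_refl].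
Qed.

Lemma finalRay l y r : Int q d l -> is_vertex (std_poly B cB) y ->
  dotp a (q + l *: d) + dotp b y = ca + cb ->
  B *m r = 0 -> (forall j, 0 <= r j 0) -> edgeDir B y r ->
  0 < dotp a d * dotp b r ->
  exists z', Xv z' /\ walk_le RP 1 (col_mx (q + l *: d) y) z'.
Proof.
move=> hI Vy hr Br r0 her pos.
have [j [dj qj]] := d_out.
have lp := l_pos hI.
have br0 : dotp b r != 0 by apply/eqP => h; move: pos; rewrite h mulr0 ltxx.
set t := l * dotp a d / dotp b r.
have t0 : 0 < t.
  rewrite /t -mulrA pmulr_rgt0 //.
  move: pos br0; move: (dotp a d) (dotp b r) => u w pos w0.
  case: (ltgtP 0 w) => hw.
  - have up : 0 < u by nra.
    by rewrite divr_gt0.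
  - have un : u < 0 by nra.
    by rewrite -divrNN divr_gt0 // oppr_gt0.
  - by move: w0; rewrite -hw eqxx.
have Py' : std_poly B cB (y + t *: r).
  split; first by rewrite mulmxDr -scalemxAr Br scaler0 addr0 (Vy.1).1.
  by move=> i; rewrite !mxE addr_ge0 ?(Vy.1).2 // mulr_ge0 // ltW.
have hrel : (l - 0) * dotp a d = t * dotp b r by rewrite subr0 /t divfK.
have feas : forall i, 0 <= q i 0 + 0 * d i 0 by move=> i; rewrite mul0r addr0 q0.
have hit : exists j, d j 0 != 0 /\ q j 0 + 0 * d j 0 = 0.
  by exists j; rewrite mul0r addr0.
have [Xz adjz] := RstepB hI Vy hr Br her t0 Py' br0 hrel feas hit.
by exists (col_mx (q + 0 *: d) (y + t *: r)); split=> //; apply: walk_adj.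
Qed.

Lemma minContra l y eps : Int q d l ->
  dotp a (q + l *: d) + dotp b y = ca + cb -> eps * dotp a d < 0 ->
  eps * dotp b y <= eps * (ca + cb) - eps * dotp a q -> False.
Proof.
move=> hI hr ead hb; have lp := l_pos hI.
move: hr; rewrite relE => hr.
have : eps * (l * dotp a d) >= 0.
  have -> : l * dotp a d = ca + cb - dotp a q - dotp b y by rewrite -hr; ring.
  move: hb; move: (dotp b y) (dotp a q) => u w hb; nra.
move: ead; move: (dotp a d) => w ead h; nra.
Qed.

End Line.


Section FaceA.
Variables (x1 : 'cV[R]_n1) (y1 : 'cV[R]_n2).
Hypotheses (Vy1 : is_vertex (std_poly B cB) y1) (PA1 : std_poly A cA x1)
  (rel1 : dotp a x1 + dotp b y1 = ca + cb).

Local Notation Ab := (col_mx A a).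
Local Notation rA := (col_mx A a *m x1).

Lemma PAbP x : std_poly Ab rA x <-> [/\ std_poly A cA x & dotp a x = dotp a x1].
Proof.
rewrite /std_poly !mul_col_mx; split.
  move=> [/eq_col_mx [hA ha] x0]; split; first by split=> //; rewrite hA (PA1.1).
  by move/m11P: ha; rewrite !dotp_m11 !mxE.
move=> [[hA x0] ha]; split=> //; rewrite hA (PA1.1); congr col_mx.
by rewrite !dotp_m11 ha.
Qed.

Lemma AbkerP gx : Ab *m gx = 0 <-> A *m gx = 0 /\ dotp a gx = 0.
Proof.
rewrite mul_col_mx -(col_mx0 _ m1 1); split.
  by move=> /eq_col_mx [-> h]; split=> //; move/m11P: h; rewrite dotp_m11 !mxE.
by move=> [-> h]; rewrite dotp_m11 h; congr col_mx; apply/m11P; rewrite !mxE mul0rn.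
Qed.

Lemma Abar_vertex x : std_poly A cA x -> dotp a x = dotp a x1 ->
  (forall gx, A *m gx = 0 -> dotp a gx = 0 -> sub2 gx x x -> gx = 0) ->
  is_vertex (std_poly Ab rA) x.
Proof.
move=> Px ax hk; apply: indep_vertex; first by apply/PAbP.
by move=> g /AbkerP [h1 h2]; apply: hk.
Qed.

Lemma face_vertex x : is_vertex (std_poly Ab rA) x -> is_vertex RP (col_mx x y1).
Proof.
move=> Vx; have [Px ax] := (PAbP x).1 (Vx.1).
apply: RVert.
  by apply/RpolyP; split=> //; [case: Vy1 | rewrite ax].
move=> gx gy [hA hB hab] s1 s2.
have gy0 : gy = 0 by apply: (vertex_indep Vy1).
split=> //; apply: (vertex_indep Vx) => //; apply/AbkerP; split=> //.
by move: hab; rewrite gy0 dotp0 addr0.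
Qed.
Arguments face_vertex : clear implicits.

Lemma face_adj x x' : adjacent (std_poly Ab rA) x x' ->
  adjacent RP (col_mx x y1) (col_mx x' y1).
Proof.
move=> hadj; have hk := adjN hadj.
case: hadj => Vx [Vx' [ne _]].
apply: RAdj; [exact: face_vertex | exact: face_vertex | | ].
  by move=> /eq_col_mx [] /ne.
move=> gx gy [hA hB hab] s1 s2.
have gy0 : gy = 0.
  by apply: (vertex_indep Vy1) => // j yj _; apply: s2.
have ag : dotp a gx = 0 by move: hab; rewrite gy0 dotp0 addr0.
have [mu emu] := hk gx (proj2 (AbkerP gx) (conj hA ag)) s1.
by exists mu; rewrite emu gy0 subrr scaler0.
Qed.

Lemma liftA k x x' : walk_le (std_poly Ab rA) k x x' ->
  walk_le RP k (col_mx x y1) (col_mx x' y1).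
Proof.
elim: k x => [|k IH] x /=; first by move=> ->.
case=> [->|[u [hadj wk]]]; first by left.
by right; exists (col_mx u y1); split; [exact: face_adj | exact: IH].
Qed.

End FaceA.


Lemma main_thm
  (hx : exists z, is_vertex RP z /\ is_vertex (std_poly A cA) (usubmx z))
  (kA kB : nat)
  (hkA : mx_diam_le (col_mx A a) kA)
  (hkB : diam_le (std_poly B cB) kB)
  (z1 : 'cV[R]_(n1 + n2))
  (hz1 : is_vertex RP z1 /\ is_vertex (std_poly B cB) (dsubmx z1)) :
  exists z', (is_vertex RP z' /\ is_vertex (std_poly A cA) (usubmx z')) /\
             walk_le RP (kA + kB + 1) z1 z'.
Proof.
case: hz1 => Vz1 Vy1.
set x1 := usubmx z1; set y1 := dsubmx z1.
have ez1 : z1 = col_mx x1 y1 by rewrite vsubmxK.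
rewrite ez1 in Vz1 *.
have [PA1 PB1 rel1] := (RpolyP x1 y1).1 Vz1.1.
case: hx => zs [Vzs Vv].
set v := usubmx zs in Vv; set ys := dsubmx zs.
have ezs : zs = col_mx v ys by rewrite vsubmxK.
rewrite ezs in Vzs.
have [PAv PBys relv] := (RpolyP v ys).1 Vzs.1.
set rA := col_mx A a *m x1.
have Vx1 : is_vertex (std_poly (col_mx A a) rA) x1.
  apply: Abar_vertex => // gx hA ha sg.
  have hk : Rkcond gx 0 by split=> //; [exact: mulmx0 | rewrite dotp0 addr0].
  have s0 : sub2 (0 : 'cV[R]_n2) y1 y1 by move=> j _ _; rewrite mxE.
  by have [] := RindepE Vz1 hk sg s0.
have helper : forall w, is_vertex (std_poly A cA) w -> dotp a w = dotp a x1 ->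
    exists z', (is_vertex RP z' /\ is_vertex (std_poly A cA) (usubmx z')) /\
               walk_le RP (kA + kB + 1) (col_mx x1 y1) z'.
  move=> w Vw aw.
  have VwA : is_vertex (std_poly (col_mx A a) rA) w.
    apply: Abar_vertex => //; first exact: Vw.1.
    by move=> gx hA _ sg; apply: (vertex_indep Vw).
  exists (col_mx w y1); split.
    by split; [exact: (face_vertex Vy1 PA1 rel1 VwA) | rewrite col_mxKu].
  apply: (walk_mono (k := kA)); first by rewrite -addnA leq_addr.
  by apply: (liftA Vy1 PA1 rel1); apply: hkA.
have key : forall eps : R, eps != 0 -> eps * dotp a x1 < eps * dotp a v ->
    exists z', (is_vertex RP z' /\ is_vertex (std_poly A cA) (usubmx z')) /\
               walk_le RP (kA + kB + 1) (col_mx x1 y1) z'.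
  move=> eps e0 lt.
  have fE : forall x, dotp (eps *: a) x = eps * dotp a x by move=> x; rewrite dotpZl.
  have [q [Vq fq [hq|[lt' [d [Ad dq fd hed hI]]]]]] :=
    descentT (f := eps *: a) Vv PA1 (ltac:(by rewrite !fE)).
    by apply: (helper q Vq); move: hq; rewrite !fE => /(mulfI e0).
  move: fq lt' fd hI; rewrite !fE => fq lt' fd hI.
  set l := (eps * dotp a x1 - eps * dotp a q) / (eps * dotp a d) in hI.
  have ad0 : dotp a d != 0 by apply/eqP => h; move: fd; rewrite h mulr0 ltxx.
  have ed0 : eps * dotp a d != 0 by rewrite mulf_neq0.
  have ax2 : dotp a (q + l *: d) = dotp a x1.
    apply: (mulfI e0); rewrite dotpD dotpZ /l mulrDr mulrCA divfK //; ring.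
  have PAx2 : std_poly A cA (q + l *: d) by apply: line_PA => //; apply: Int_nonneg.
  have Vx2 : is_vertex (std_poly (col_mx A a) rA) (q + l *: d).
    apply: Abar_vertex => // gx hA ha sg.
    have [nu enu] := hed gx hA (line_sub2 sg).
    move: ha; rewrite enu dotpZ => /eqP; rewrite mulf_eq0 (negbTE ad0) orbF.
    by move/eqP => ->; rewrite scale0r.
  have wA : walk_le RP kA (col_mx x1 y1) (col_mx (q + l *: d) y1).
    by apply: (liftA Vy1 PA1 rel1); apply: hkA.
  have rel2 : dotp a (q + l *: d) + dotp b y1 = ca + cb by rewrite ax2.
  have [yo [Vyo Hyo]] := @descent _ _ B cB (eps *: b) y1 Vy1.
  have wB := hkB _ _ Vy1 Vyo.
  case: (liftB Vq Ad hed ad0 wB hI Vy1 rel2) => [[z' [Xz' wz]]|[l' [hI' rel' wz]]].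
    exists z'; split; first exact: Xz'.
    apply: (walk_mono (k := kA + kB)); first by rewrite leq_addr.
    exact: walk_trans wA wz.
  case: Hyo => [hmin|[r [Br r0 fr her]]].
    exfalso; apply: (minContra Vq Ad ad0 dq hI' rel' fd).
    have := hmin ys PBys; rewrite !dotpZl => h; apply: (le_trans h).
    have -> : dotp b ys = ca + cb - dotp a v by rewrite -relv; ring.
    have : eps * dotp a q <= eps * dotp a v := fq.
    move=> h2; rewrite mulrBr lerD2l lerN2 //.
  move: fr; rewrite dotpZl => fr.
  have pos : 0 < dotp a d * dotp b r.
    move: fd fr; move: (dotp a d) (dotp b r) => u w h1 h2; nra.
  have [z' [Xz' wz']] := finalRay Vq Ad hed ad0 dq hI' Vyo rel' Br r0 her pos.
  exists z'; split; first exact: Xz'.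
  exact: walk_trans (walk_trans wA wz) wz'.
case: (ltgtP (dotp a v) (dotp a x1)) => hv.
- by apply: (key (-1)); [rewrite oppr_eq0 oner_eq0 | rewrite !mulN1r ltrN2].
- by apply: (key 1); [rewrite oner_eq0 | rewrite !mul1r].
- exact: (helper v Vv hv).
Qed.

End Blocks.

End Basics.

Unset Implicit Arguments.
Set Strict Implicit.

Theorem lemma4 (R : realType) (m1 n1 m2 n2 : nat)
  (A : 'M[R]_(m1, n1)) (a : 'rV[R]_n1) (b : 'rV[R]_n2) (B : 'M[R]_(m2, n2))
  (cA : 'cV[R]_m1) (cB : 'cV[R]_m2) (ca cb : R)
  (ha : a != 0) (hb : b != 0)
  (hsimple : std_nondegenerate (Rmat A a b B) (Rrhs cA ca cb cB))
  (hx : exists z, is_vertex (std_poly (Rmat A a b B) (Rrhs cA ca cb cB)) z /\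
                  is_vertex (std_poly A cA) (usubmx z))
  (hy : exists z, is_vertex (std_poly (Rmat A a b B) (Rrhs cA ca cb cB)) z /\
                  is_vertex (std_poly B cB) (dsubmx z))
  (kA kB : nat)
  (hkA : mx_diam_le (col_mx A a) kA)
  (hkB : diam_le (std_poly B cB) kB)
  (z1 : 'cV[R]_(n1 + n2))
  (hz1 : is_vertex (std_poly (Rmat A a b B) (Rrhs cA ca cb cB)) z1 /\
         is_vertex (std_poly B cB) (dsubmx z1)) :
  exists z', (is_vertex (std_poly (Rmat A a b B) (Rrhs cA ca cb cB)) z' /\
              is_vertex (std_poly A cA) (usubmx z')) /\
             walk_le (std_poly (Rmat A a b B) (Rrhs cA ca cb cB)) (kA + kB + 1) z1 z'.
Proof.
exact: (main_thm hx hkA hkB hz1).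
Qed.
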